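(* Let $\lambda\subset\mathbb{H}$ be a (complex) Lagrangian subspace such that $h(v,v)\ge 0$ for every $v\in\lambda$. Then $\lambda$ is transverse to $H_1=H\oplus 0$, i.e. $\lambda\cap H_1=\{0\}$ and $\lambda+H_1=\mathbb{H}$.
   Context: $H$ is a complex (separable) Hilbert space with inner product $\langle\cdot,\cdot\rangle$ (antilinear in the second variable), $\tau$ is an isometric antilinear involution of $H$, and $(\xi,\eta)=\langle \xi,\tau\eta\rangle$ is the associated symmetric bilinear form. $\mathbb{H}=H\oplus H=\{\eta\oplus\xi\}$ with Hilbert inner product $\langle \eta\oplus\xi,\eta'\oplus\xi'\rangle=\langle\eta,\eta'\rangle+\langle\xi,\xi'\rangle$ and complex symplectic form $\omega(\eta\oplus\xi,\eta'\oplus\xi')=(\eta,\xi')-(\xi,\eta')$. For a subspace $F$, $F^{\circ}$ denotes its $\omega$-orthogonal; a Lagrangian is a subspace $\lambda$ with $\lambda^\circ=\lambda$. $H_1=H\oplus 0$, $H_2=0\oplus H$. The Hermitian form $h$ on $\mathbb{H}$ is $h(\eta\oplus\xi,\eta'\oplus\xi')=\langle\xi,\xi'\rangle-\langle\eta,\eta'\rangle$. *)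

(* Defs.v *)
From Stdlib Require Import Reals.
Open Scope R_scope.

Record C := mkC { re : R; im : R }.
Definition C0 : C := mkC 0 0.
Definition C1 : C := mkC 1 0.
Definition Cadd (a b : C) : C := mkC (re a + re b) (im a + im b).
Definition Copp (a : C) : C := mkC (- re a) (- im a).
Definition Csub (a b : C) : C := Cadd a (Copp b).
Definition Cmul (a b : C) : C :=
  mkC (re a * re b - im a * im b) (re a * im b + im a * re b).
Definition Cconj (a : C) : C := mkC (re a) (- im a).

(* inner product linear in the first variable, antilinear in the second *)
Record HilbertSpace := {
  vec :> Type;
  vadd : vec -> vec -> vec;
  vzero : vec;
  vopp : vec -> vec;
  smul : C -> vec -> vec;
  inner : vec -> vec -> C;
  vadd_assoc : forall x y z, vadd x (vadd y z) = vadd (vadd x y) z;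
  vadd_comm : forall x y, vadd x y = vadd y x;
  vadd_0l : forall x, vadd vzero x = x;
  vadd_oppl : forall x, vadd (vopp x) x = vzero;
  smul_addr : forall c x y, smul c (vadd x y) = vadd (smul c x) (smul c y);
  smul_addl : forall c d x, smul (Cadd c d) x = vadd (smul c x) (smul d x);
  smul_mul : forall c d x, smul (Cmul c d) x = smul c (smul d x);
  smul_1 : forall x, smul C1 x = x;
  inner_addl : forall x y z, inner (vadd x y) z = Cadd (inner x z) (inner y z);
  inner_smull : forall c x y, inner (smul c x) y = Cmul c (inner x y);
  inner_conj : forall x y, inner y x = Cconj (inner x y);
  inner_pos : forall x, 0 <= re (inner x x);
  inner_def : forall x, inner x x = C0 -> x = vzero;
  complete : forall u : nat -> vec,
    (forall eps, 0 < eps -> exists N, forall m n, (N <= m)%nat -> (N <= n)%nat ->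
       sqrt (re (inner (vadd (u m) (vopp (u n))) (vadd (u m) (vopp (u n))))) < eps) ->
    exists x, forall eps, 0 < eps -> exists N, forall n, (N <= n)%nat ->
       sqrt (re (inner (vadd (u n) (vopp x)) (vadd (u n) (vopp x)))) < eps
}.

Arguments vadd {h}. Arguments vzero {h}. Arguments vopp {h}.
Arguments smul {h}. Arguments inner {h}.

Definition vnorm {H : HilbertSpace} (x : H) : R := sqrt (re (inner x x)).
Definition vsub {H : HilbertSpace} (x y : H) : H := vadd x (vopp y).

Definition separable (H : HilbertSpace) : Prop :=
  exists e : nat -> H, forall (x : H) eps, 0 < eps ->
    exists n, vnorm (vsub x (e n)) < eps.

Definition isometric_antilinear_involution {H : HilbertSpace} (tau : H -> H) : Prop :=
  (forall x y, tau (vadd x y) = vadd (tau x) (tau y)) /\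
  (forall c x, tau (smul c x) = smul (Cconj c) (tau x)) /\
  (forall x, tau (tau x) = x) /\
  (forall x, vnorm (tau x) = vnorm x).

(* symmetric bilinear form (xi, eta) = <xi, tau eta> *)
Definition bil {H : HilbertSpace} (tau : H -> H) (x y : H) : C := inner x (tau y).

(* the doubled space HH = H (+) H, elements (eta, xi) *)
Definition HH (H : HilbertSpace) : Type := (H * H)%type.
Definition HHadd {H : HilbertSpace} (v w : HH H) : HH H :=
  (vadd (fst v) (fst w), vadd (snd v) (snd w)).
Definition HHzero {H : HilbertSpace} : HH H := (vzero, vzero).
Definition HHsmul {H : HilbertSpace} (c : C) (v : HH H) : HH H :=
  (smul c (fst v), smul c (snd v)).

Definition omega {H : HilbertSpace} (tau : H -> H) (v w : HH H) : C :=
  Csub (bil tau (fst v) (snd w)) (bil tau (snd v) (fst w)).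

Definition hform {H : HilbertSpace} (v w : HH H) : C :=
  Csub (inner (snd v) (snd w)) (inner (fst v) (fst w)).

Definition is_subspace {H : HilbertSpace} (F : HH H -> Prop) : Prop :=
  F HHzero /\ (forall v w, F v -> F w -> F (HHadd v w)) /\
  (forall c v, F v -> F (HHsmul c v)).

Definition omega_orth {H : HilbertSpace} (tau : H -> H) (F : HH H -> Prop) : HH H -> Prop :=
  fun w => forall v, F v -> omega tau v w = C0.

Definition lagrangian {H : HilbertSpace} (tau : H -> H) (L : HH H -> Prop) : Prop :=
  is_subspace L /\ (forall w, omega_orth tau L w <-> L w).

Definition H1 {H : HilbertSpace} : HH H -> Prop := fun v => snd v = vzero.

Definition transverse {H : HilbertSpace} (L M : HH H -> Prop) : Prop :=
  (forall v, L v -> M v -> v = HHzero) /\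
  (forall p : HH H, exists l m, L l /\ M m /\ p = HHadd l m).

(* Main.v *)
Require Import Defs.
From Stdlib Require Import Reals Lra Psatz ClassicalEpsilon Classical.
Require Import Defs.
Open Scope R_scope.

Arguments vadd_assoc {h}.
Arguments vadd_comm {h}.
Arguments vadd_0l {h}.
Arguments vadd_oppl {h}.
Arguments smul_addr {h}.
Arguments smul_addl {h}.
Arguments smul_mul {h}.
Arguments smul_1 {h}.
Arguments inner_addl {h}.
Arguments inner_smull {h}.
Arguments inner_conj {h}.
Arguments inner_pos {h}.
Arguments inner_def {h}.

Ltac cs := unfold Csub, Cadd, Copp, Cmul, Cconj, C0, C1 in *; simpl in *.

Lemma Ceq (a b : C) : re a = re b -> im a = im b -> a = b.
Proof. destruct a, b; simpl; intros; subst; reflexivity. Qed.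

Lemma vadd_0r {H : HilbertSpace} (x : H) : vadd x vzero = x.
Proof. rewrite vadd_comm; apply vadd_0l. Qed.
Lemma vadd_oppr {H : HilbertSpace} (x : H) : vadd x (vopp x) = vzero.
Proof. rewrite vadd_comm; apply vadd_oppl. Qed.
Lemma vadd_cancel_l {H : HilbertSpace} (x y z : H) : vadd x y = vadd x z -> y = z.
Proof.
  intro E. rewrite <- (vadd_0l y), <- (vadd_0l z), <- (vadd_oppl x), <- !vadd_assoc, E; reflexivity.
Qed.
Lemma smul_C0 {H : HilbertSpace} (x : H) : smul C0 x = vzero.
Proof.
  apply (vadd_cancel_l (smul C0 x)). rewrite <- smul_addl, vadd_0r.
  f_equal. apply Ceq; cs; ring.
Qed.
Lemma smul_m1 {H : HilbertSpace} (x : H) : smul (mkC (-1) 0) x = vopp x.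
Proof.
  apply (vadd_cancel_l x). rewrite vadd_oppr.
  rewrite <- (smul_1 x) at 1. rewrite <- smul_addl.
  replace (Cadd C1 (mkC (-1) 0)) with C0 by (apply Ceq; cs; ring).
  apply smul_C0.
Qed.
Lemma sub_zero {H : HilbertSpace} (x b : H) : vadd x (vopp b) = vzero -> x = b.
Proof.
  intro E. rewrite <- (vadd_0r x), <- (vadd_oppl b), vadd_assoc, E, vadd_0l. reflexivity.
Qed.

Lemma inner_addr {H : HilbertSpace} (x y z : H) : inner x (vadd y z) = Cadd (inner x y) (inner x z).
Proof.
  rewrite (inner_conj (vadd y z) x), inner_addl, (inner_conj y x), (inner_conj z x).
  apply Ceq; cs; ring.
Qed.
Lemma inner_smulr {H : HilbertSpace} c (x y : H) : inner x (smul c y) = Cmul (Cconj c) (inner x y).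
Proof.
  rewrite (inner_conj (smul c y) x), inner_smull, (inner_conj y x). apply Ceq; cs; ring.
Qed.
Lemma inner_oppl {H : HilbertSpace} (x y : H) : inner (vopp x) y = Copp (inner x y).
Proof. rewrite <- smul_m1, inner_smull. apply Ceq; cs; ring. Qed.
Lemma inner_oppr {H : HilbertSpace} (x y : H) : inner x (vopp y) = Copp (inner x y).
Proof. rewrite <- smul_m1, inner_smulr. apply Ceq; cs; ring. Qed.
Lemma inner_0l {H : HilbertSpace} (y : H) : inner vzero y = C0.
Proof. rewrite <- (smul_C0 y), inner_smull. apply Ceq; cs; ring. Qed.
Lemma inner_0r {H : HilbertSpace} (y : H) : inner y vzero = C0.
Proof. rewrite <- (smul_C0 y), inner_smulr. apply Ceq; cs; ring. Qed.
Lemma im_self {H : HilbertSpace} (x : H) : im (inner x x) = 0.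
Proof. pose proof (f_equal im (inner_conj x x)) as e. cs. lra. Qed.
Lemma re_sym {H : HilbertSpace} (x y : H) : re (inner y x) = re (inner x y).
Proof. rewrite inner_conj. cs. reflexivity. Qed.
Lemma im_sym {H : HilbertSpace} (x y : H) : im (inner y x) = - im (inner x y).
Proof. rewrite inner_conj. cs. reflexivity. Qed.

Definition Nn {H : HilbertSpace} (x : H) := re (inner x x).
Lemma Nn_pos {H : HilbertSpace} (x : H) : 0 <= Nn x.
Proof. apply inner_pos. Qed.
Lemma Nn_zero {H : HilbertSpace} (x : H) : Nn x = 0 -> x = vzero.
Proof. intro E. apply inner_def. apply Ceq; cs; [exact E| apply im_self]. Qed.

Ltac expand := repeat progress rewrite ?inner_addl, ?inner_addr, ?inner_smull, ?inner_smulr,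
   ?inner_oppl, ?inner_oppr; cs.
Ltac expand_in h := repeat progress rewrite ?inner_addl, ?inner_addr, ?inner_smull, ?inner_smulr,
   ?inner_oppl, ?inner_oppr in h; cs.

Lemma quad_disc (a r q : R) : 0 <= q -> (forall t, 0 <= a + 2*t*r + t*t*q) -> r*r <= a*q.
Proof.
  intros hq Ht. destruct (Req_dec q 0) as [q0|q0].
  - subst q. destruct (Req_dec r 0) as [r0|r0]; [subst; lra|].
    specialize (Ht (-(a+1)/(2*r))). exfalso.
    assert (E: 2 * (-(a+1)/(2*r)) * r = -(a+1)) by (field; auto). nra.
  - assert (hq' : 0 < q) by lra. specialize (Ht (-r/q)).
    assert (E: (-r/q) * q = - r) by (field; auto).
    set (t := -r/q) in *. nra.
Qed.

Lemma CS_re {H : HilbertSpace} (x y : H) : re (inner x y) * re (inner x y) <= Nn x * Nn y.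
Proof.
  apply quad_disc; [apply Nn_pos|]. intro t.
  pose proof (inner_pos (vadd x (smul (mkC t 0) y))) as P. expand_in P.
  pose proof (re_sym x y). pose proof (im_sym x y). pose proof (im_self y). unfold Nn. nra.
Qed.
Lemma CS_im {H : HilbertSpace} (x y : H) : im (inner x y) * im (inner x y) <= Nn x * Nn y.
Proof.
  pose proof (CS_re x (smul (mkC 0 1) y)) as P. unfold Nn in *. expand_in P.
  pose proof (im_self y). nra.
Qed.

Lemma tau_0 {H : HilbertSpace} (tau : H -> H) : isometric_antilinear_involution tau -> tau vzero = vzero.
Proof.
  intros [Ta _]. apply (vadd_cancel_l (tau vzero)). rewrite <- Ta, !vadd_0r. reflexivity.
Qed.
Lemma tau_opp {H : HilbertSpace} (tau : H -> H) : isometric_antilinear_involution tau ->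
  forall x, tau (vopp x) = vopp (tau x).
Proof.
  intros [Ta [Ts _]] x. rewrite <- !smul_m1, Ts. f_equal. apply Ceq; cs; ring.
Qed.
Lemma tau_N {H : HilbertSpace} (tau : H -> H) : isometric_antilinear_involution tau ->
  forall x, re (inner (tau x) (tau x)) = re (inner x x).
Proof.
  intros [_ [_ [_ Tn]]] x. specialize (Tn x). unfold vnorm in Tn.
  apply sqrt_inj; auto; apply inner_pos.
Qed.

Lemma part1 {H : HilbertSpace} (L : HH H -> Prop)
  (Hpos : forall v, L v -> im (hform v v) = 0 /\ 0 <= re (hform v v)) :
  forall v, L v -> snd v = vzero -> v = HHzero.
Proof.
  intros [a b] Lv hb. simpl in hb. subst b. destruct (Hpos _ Lv) as [_ P].
  unfold hform in P. simpl in P. rewrite inner_0l in P. cs.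
  assert (Nn a = 0) by (pose proof (Nn_pos a); unfold Nn in *; lra).
  apply Nn_zero in H0. subst. reflexivity.
Qed.

Lemma einv (eps : R) : 0 < eps -> exists N : nat, forall n, (N <= n)%nat -> / (INR n + 1) < eps.
Proof.
  intro he. destruct (archimed_cor1 eps he) as [N [h1 h2]]. exists N. intros n hn.
  apply Rle_lt_trans with (/ INR N); auto.
  apply Rinv_le_contravar. apply lt_0_INR; auto.
  apply le_INR in hn. lra.
Qed.

Lemma einv_le1 (n : nat) : / (INR n + 1) <= 1.
Proof.
  pose proof (pos_INR n). rewrite <- Rinv_1. apply Rinv_le_contravar; lra.
Qed.
Lemma einv_pos (n : nat) : 0 < / (INR n + 1).
Proof. pose proof (pos_INR n). apply Rinv_0_lt_compat; lra. Qed.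

Lemma complete_N {H : HilbertSpace} (u : nat -> H) :
  (forall eps, 0 < eps -> exists N, forall m n, (N <= m)%nat -> (N <= n)%nat ->
      Nn (vadd (u m) (vopp (u n))) < eps) ->
  exists x, forall eps, 0 < eps -> exists N, forall n, (N <= n)%nat -> Nn (vadd (u n) (vopp x)) < eps.
Proof.
  intro Hc. destruct (complete H u) as [x Hx].
  - intros eps he. destruct (Hc (eps*eps)) as [N HN]; [nra|]. exists N; intros m n hm hn.
    rewrite <- (sqrt_square eps) by lra. apply sqrt_lt_1_alt. split; [apply inner_pos|].
    apply HN; auto.
  - exists x. intros eps he. destruct (Hx (sqrt eps)) as [N HN]; [apply sqrt_lt_R0; lra|].
    exists N; intros n hn. specialize (HN n hn). apply sqrt_lt_0_alt in HN. exact HN.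
Qed.

Lemma lim_combo (A B z : R) : 0 <= A -> 0 <= B ->
  (forall d, 0 < d -> exists p q, z = p - q /\ p*p <= A*d /\ q*q <= B*d) -> z = 0.
Proof.
  intros hA hB Hd. apply NNPP; intro hz.
  assert (hz2 : 0 < z*z) by (apply Rsqr_pos_lt in hz; unfold Rsqr in hz; exact hz).
  assert (hd : 0 < z*z / (2*A + 2*B + 1)) by (apply Rdiv_lt_0_compat; lra).
  assert (hd2 : (2*A+2*B+1) * (z*z / (2*A + 2*B + 1)) = z*z) by (field; lra).
  revert hd hd2. generalize (z*z / (2*A + 2*B + 1)). intros d hd hd2.
  destruct (Hd d hd) as [p [q [E [hp hq]]]]. subst z.
  assert ((p-q)*(p-q) <= 2*(p*p) + 2*(q*q)) by (pose proof (Rle_0_sqr (p+q)); unfold Rsqr in *; lra). lra.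
Qed.

Lemma Nn_tau {H : HilbertSpace} (tau : H -> H) : isometric_antilinear_involution tau ->
  forall x, Nn (tau x) = Nn x.
Proof. intros T x. unfold Nn. apply tau_N; auto. Qed.

Lemma exists_snd {H : HilbertSpace} (tau : H -> H)
  (Htau : isometric_antilinear_involution tau) (L : HH H -> Prop)
  (HL : lagrangian tau L)
  (Hpos : forall v, L v -> im (hform v v) = 0 /\ 0 <= re (hform v v)) (b : H) :
  exists l, L l /\ snd l = b.
Proof.
  pose proof HL as [[L0 [Ladd Lsmul]] Lorth].
  pose (f := fun v : HH H => Nn (vadd (snd v) (vopp b))).
  assert (Hinf: exists d, (forall v, L v -> d <= f v) /\
                          (forall eps, 0 < eps -> exists v, L v /\ f v < d + eps)).
  { set (E := fun r => exists v, L v /\ r = - f v).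
    destruct (completeness E) as [m [Hub Hl]].
    - exists 0. intros r [v [_ ->]]. pose proof (Nn_pos (vadd (snd v) (vopp b))). unfold f. lra.
    - exists (- f HHzero); exists HHzero; auto.
    - exists (-m). split.
      + intros v Lv. assert (E (- f v)) as Ev by (exists v; auto). specialize (Hub _ Ev). lra.
      + intros eps he. apply NNPP; intro Hn.
        assert (is_upper_bound E (m - eps)) as U.
        { intros r [v [Lv ->]]. destruct (Rle_dec (-f v) (m - eps)) as [h|h]; auto.
          exfalso; apply Hn; exists v; split; auto; lra. }
        specialize (Hl _ U). lra. }
  destruct Hinf as [d [Hd1 Hd2]].
  assert (Hseq: forall n:nat, exists v, L v /\ f v < d + / (INR n + 1)).
  { intro n; apply Hd2. apply einv_pos. }
  assert (Hch: exists vs : nat -> HH H, forall n, L (vs n) /\ f (vs n) < d + / (INR n + 1)).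
  { exists (fun n => proj1_sig (constructive_indefinite_description _ (Hseq n))).
    intro n. exact (proj2_sig (constructive_indefinite_description _ (Hseq n))). }
  destruct Hch as [vs Hvs].
  assert (Hdiff: forall n m, Nn (vadd (fst (vs n)) (vopp (fst (vs m))))
                             <= Nn (vadd (snd (vs n)) (vopp (snd (vs m))))).
  { intros n m. destruct (Hpos _ (Ladd _ _ (proj1 (Hvs n)) (Lsmul (mkC (-1) 0) _ (proj1 (Hvs m)))))
      as [_ P].
    unfold hform, HHadd, HHsmul in P; simpl in P. unfold Nn. expand_in P. expand. lra. }
  assert (Hpar: forall n m, Nn (vadd (snd (vs n)) (vopp (snd (vs m))))
                            <= 2 * / (INR n + 1) + 2 * / (INR m + 1)).
  { intros n m.
    pose proof (Hd1 _ (Lsmul (mkC (/2) 0) _ (Ladd _ _ (proj1 (Hvs n)) (proj1 (Hvs m))))) as P.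
    pose proof (proj2 (Hvs n)) as Pn. pose proof (proj2 (Hvs m)) as Pm.
    unfold f, HHadd, HHsmul, Nn in *; simpl in *. expand_in P. expand_in Pn. expand_in Pm. expand.
    lra. }
  assert (HcX: forall eps, 0 < eps -> exists N, forall m n, (N <= m)%nat -> (N <= n)%nat ->
      Nn (vadd (snd (vs m)) (vopp (snd (vs n)))) < eps).
  { intros eps he. destruct (einv (eps/4)) as [N HN]; [lra|]. exists N. intros m n hm hn.
    specialize (Hpar m n). specialize (HN m hm) as h1. specialize (HN n hn) as h2. lra. }
  assert (HcY: forall eps, 0 < eps -> exists N, forall m n, (N <= m)%nat -> (N <= n)%nat ->
      Nn (vadd (fst (vs m)) (vopp (fst (vs n)))) < eps).
  { intros eps he. destruct (HcX eps he) as [N HN]. exists N. intros m n hm hn.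
    specialize (HN m n hm hn). specialize (Hdiff m n). lra. }
  destruct (complete_N (fun n => snd (vs n)) HcX) as [x Hx].
  destruct (complete_N (fun n => fst (vs n)) HcY) as [y Hy].
  simpl in Hx, Hy.
  assert (Hboth: forall dl, 0 < dl -> exists n, Nn (vadd (snd (vs n)) (vopp x)) < dl /\ Nn (vadd (fst (vs n)) (vopp y)) < dl /\ / (INR n + 1) < dl).
  { intros dl hdl. destruct (Hx dl hdl) as [N1 H1']. destruct (Hy dl hdl) as [N2 H2'].
    destruct (einv dl hdl) as [N3 H3']. exists (N1 + N2 + N3)%nat.
    split; [apply H1'; lia| split; [apply H2'; lia| apply H3'; lia]]. }
  assert (Lyx: L (y, x)).
  { apply Lorth. intros u Lu.
    assert (Hz: forall n, omega tau u (vs n) = C0) by (intro n; apply (proj2 (Lorth (vs n)) (proj1 (Hvs n))); auto).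
    pose proof Htau as [Ta [Ts [Tinv Tn]]].
    assert (hA := Nn_pos (fst u)). assert (hB := Nn_pos (snd u)).
    apply Ceq.
    - apply (lim_combo (Nn (fst u)) (Nn (snd u))); auto.
      intros dl hdl. destruct (Hboth dl hdl) as [n [h1 [h2 _]]].
      exists (- re (inner (fst u) (tau (vadd (snd (vs n)) (vopp x))))),
             (- re (inner (snd u) (tau (vadd (fst (vs n)) (vopp y))))).
      pose proof (CS_re (fst u) (tau (vadd (snd (vs n)) (vopp x)))) as C1.
      pose proof (CS_re (snd u) (tau (vadd (fst (vs n)) (vopp y)))) as C2.
      rewrite (Nn_tau tau Htau) in C1, C2.
      split; [|split].
      + pose proof (Hz n) as Hzn. unfold omega, bil in *; simpl.
        apply (f_equal re) in Hzn. rewrite !Ta, !(tau_opp tau Htau). expand. expand_in Hzn. lra.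
      + apply Rle_trans with (Nn (fst u) * Nn (vadd (snd (vs n)) (vopp x))); [nra|].
        apply Rmult_le_compat_l; lra.
      + apply Rle_trans with (Nn (snd u) * Nn (vadd (fst (vs n)) (vopp y))); [nra|].
        apply Rmult_le_compat_l; lra.
    - apply (lim_combo (Nn (fst u)) (Nn (snd u))); auto.
      intros dl hdl. destruct (Hboth dl hdl) as [n [h1 [h2 _]]].
      exists (- im (inner (fst u) (tau (vadd (snd (vs n)) (vopp x))))),
             (- im (inner (snd u) (tau (vadd (fst (vs n)) (vopp y))))).
      pose proof (CS_im (fst u) (tau (vadd (snd (vs n)) (vopp x)))) as C1.
      pose proof (CS_im (snd u) (tau (vadd (fst (vs n)) (vopp y)))) as C2.
      rewrite (Nn_tau tau Htau) in C1, C2.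
      split; [|split].
      + pose proof (Hz n) as Hzn. unfold omega, bil in *; simpl.
        apply (f_equal im) in Hzn. rewrite !Ta, !(tau_opp tau Htau). expand. expand_in Hzn. lra.
      + apply Rle_trans with (Nn (fst u) * Nn (vadd (snd (vs n)) (vopp x))); [nra|].
        apply Rmult_le_compat_l; lra.
      + apply Rle_trans with (Nn (snd u) * Nn (vadd (fst (vs n)) (vopp y))); [nra|].
        apply Rmult_le_compat_l; lra. }
  pose proof Htau as [Ta [Ts [Tinv Tn]]].
  assert (Hmin: Nn (vadd x (vopp b)) <= d).
  { apply Rnot_lt_le; intro hlt.
    set (eps := Nn (vadd x (vopp b)) - d).
    assert (he : 0 < eps) by (unfold eps; lra).
    set (K := Rabs d + 1). assert (hK : 0 < K) by (unfold K; pose proof (Rabs_pos d); lra).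
    set (dl := Rmin (eps/3) (eps*eps/(36*K))).
    assert (hdl : 0 < dl) by (unfold dl; apply Rmin_pos; [lra| apply Rdiv_lt_0_compat; nra]).
    assert (hdl1 : dl <= eps/3) by apply Rmin_l.
    assert (hdl2 : K * dl <= eps*eps/36).
    { apply Rle_trans with (K * (eps*eps/(36*K))); [apply Rmult_le_compat_l; [lra| apply Rmin_r]|].
      right. field. lra. }
    destruct (Hboth dl hdl) as [n [h1 [_ h3]]].
    pose proof (proj2 (Hvs n)) as Pn. unfold f in Pn. simpl in Pn.
    pose proof (einv_le1 n) as e1.
    assert (Id: Nn (vadd x (vopp b)) = Nn (vadd (snd (vs n)) (vopp b)) + Nn (vadd (snd (vs n)) (vopp x))
                 - 2 * re (inner (vadd (snd (vs n)) (vopp b)) (vadd (snd (vs n)) (vopp x)))).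
    { unfold Nn. expand. pose proof (re_sym (snd (vs n)) b). pose proof (re_sym (snd (vs n)) x).
      pose proof (re_sym b x). lra. }
    pose proof (CS_re (vadd (snd (vs n)) (vopp b)) (vadd (snd (vs n)) (vopp x))) as CS1.
    set (r := re (inner (vadd (snd (vs n)) (vopp b)) (vadd (snd (vs n)) (vopp x)))) in *.
    assert (hKd : d <= Rabs d) by apply Rle_abs.
    assert (hA : Nn (vadd (snd (vs n)) (vopp b)) <= K) by (unfold K; lra).
    assert (r * r <= K * dl).
    { apply Rle_trans with (Nn (vadd (snd (vs n)) (vopp b)) * Nn (vadd (snd (vs n)) (vopp x))); auto.
      pose proof (Nn_pos (vadd (snd (vs n)) (vopp b))). pose proof (Nn_pos (vadd (snd (vs n)) (vopp x))).
      apply Rmult_le_compat; lra. }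
    assert (- 2 * r <= eps / 3) by nra.
    unfold eps in *. lra. }
  assert (Hre: forall w, L w -> re (inner x (snd w)) - re (inner b (snd w)) = 0).
  { intros w Lw.
    assert (Q: (re (inner x (snd w)) - re (inner b (snd w))) * (re (inner x (snd w)) - re (inner b (snd w)))
               <= 0 * Nn (snd w)).
    { apply quad_disc; [apply Nn_pos|]. intro t.
      pose proof (Hd1 _ (Ladd _ _ Lyx (Lsmul (mkC t 0) _ Lw))) as P.
      unfold f, HHadd, HHsmul in P; simpl in P. unfold Nn in *. expand_in P. expand_in Hmin.
      pose proof (re_sym x (snd w)). pose proof (re_sym b (snd w)). pose proof (im_self (snd w)).
      nra. }
    nra. }
  assert (Him: forall w, L w -> im (inner x (snd w)) - im (inner b (snd w)) = 0).
  { intros w Lw.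
    assert (Q: (im (inner x (snd w)) - im (inner b (snd w))) * (im (inner x (snd w)) - im (inner b (snd w)))
               <= 0 * Nn (snd w)).
    { apply quad_disc; [apply Nn_pos|]. intro t.
      pose proof (Hd1 _ (Ladd _ _ Lyx (Lsmul (mkC 0 t) _ Lw))) as P.
      unfold f, HHadd, HHsmul in P; simpl in P. unfold Nn in *. expand_in P. expand_in Hmin.
      pose proof (im_sym x (snd w)). pose proof (im_sym b (snd w)). pose proof (im_self (snd w)).
      nra. }
    nra. }
  assert (Le: L (tau (vadd x (vopp b)), vzero)).
  { apply Lorth. intros w Lw. unfold omega, bil; simpl. rewrite (tau_0 tau Htau), Tinv, inner_0r.
    pose proof (Hre w Lw). pose proof (Him w Lw).
    pose proof (re_sym x (snd w)). pose proof (re_sym b (snd w)).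
    pose proof (im_sym x (snd w)). pose proof (im_sym b (snd w)).
    apply Ceq; expand; lra. }
  pose proof (part1 L Hpos _ Le eq_refl) as Z. apply (f_equal fst) in Z. simpl in Z.
  apply (f_equal tau) in Z. rewrite Tinv, (tau_0 tau Htau) in Z.
  apply sub_zero in Z. subst x.
  exists (y, b). auto.
Qed.

Theorem proposition2p1 (H : HilbertSpace) (Hsep : separable H) (tau : H -> H)
  (Htau : isometric_antilinear_involution tau) (L : HH H -> Prop)
  (HL : lagrangian tau L)
  (Hpos : forall v, L v -> im (hform v v) = 0 /\ 0 <= re (hform v v)) :
  transverse L H1.
Proof.
  split.
  - intros v Lv Hv. apply (part1 L Hpos v Lv Hv).
  - intros [a b]. destruct (exists_snd tau Htau L HL Hpos b) as [[l1 l2] [Ll Hl]].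
    simpl in Hl. subst l2.
    exists (l1, b), (vadd a (vopp l1), vzero). split; [exact Ll|]. split; [reflexivity|].
    unfold HHadd; simpl. f_equal.
    + rewrite vadd_comm, <- vadd_assoc, vadd_oppl, vadd_0r. reflexivity.
    + rewrite vadd_0r. reflexivity.
Qed.
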